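(* Let $X$ and $Y$ be represented spaces, let $R\subseteq\mathbb{N}^\mathbb{N}$ be endowed with a Borel measure $\mu_R$, let $I$ be an interval and let $f:\subseteq X\rightrightarrows Y$ be a multi-valued function. Then $f\le_W \mathsf{P}_I\mathsf{C}_R$ if and only if $f$ is Las Vegas computable over $R$ with measure in $I$.
   Context: A represented space is a pair $(X,\delta_X)$ where $\delta_X:\subseteq\mathbb{N}^\mathbb{N}\to X$ is a partial surjection; subsets of $\mathbb{N}^\mathbb{N}$ are represented by the identity, and pairs by the standard pairing $\langle p,q\rangle(2k)=p(k)$, $\langle p,q\rangle(2k+1)=q(k)$. Problems are partial multi-valued functions $f:\subseteq X\rightrightarrows Y$. A realizer of $f$ is a partial $F:\subseteq\mathbb{N}^\mathbb{N}\to\mathbb{N}^\mathbb{N}$ with $\delta_Y F(p)\in f(\delta_X(p))$ for all $p\in\mathrm{dom}(f\circ\delta_X)$. $f$ is Weihrauch reducible to $g$, written $f\le_W g$, if there are computable partial $H,K:\subseteq\mathbb{N}^\mathbb{N}\to\mathbb{N}^\mathbb{N}$ such that $p\mapsto H\langle p,GK(p)\rangle$ realizes $f$ for every realizer $G$ of $g$. Sierpiński space $\mathbb{S}=\{0,1\}$ is represented by $\delta_{\mathbb S}(p)=0$ if $p$ is the constant zero sequence and $\delta_{\mathbb S}(p)=1$ otherwise. For a represented space $X$, $\mathcal{A}_-(X)$ denotes the set of closed subsets of $X$ represented by negative information: a name of $A$ is a name of the characteristic function $X\to\mathbb S$ of $X\setminus A$. An interval is an interval of reals with open or closed endpoints,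 where $\infty$ is allowed as (open or closed) right endpoint, but $[\infty,\infty]$ is not an interval. If $X$ carries a Borel measure $\mu$ and $I$ is an interval, probabilistic choice $\mathsf{P}_I\mathsf{C}_X:\subseteq\mathcal{A}_-(X)\rightrightarrows X$, $A\mapsto A$, is defined on all nonempty closed $A\subseteq X$ with $\mu(A)\in I$ (any point of $A$ is an admissible output). Las Vegas computability: for $R\subseteq\mathbb{N}^\mathbb{N}$ with Borel measure $\mu_R$ and interval $I$, $f:\subseteq X\rightrightarrows Y$ is Las Vegas computable over $R$ with measure in $I$ if there exist computable $F_1,F_2:\subseteq\mathbb{N}^\mathbb{N}\to\mathbb{N}^\mathbb{N}$ such that $\langle p,r\rangle\in\mathrm{dom}(F_2)$ for all $p\in\mathrm{dom}(f\delta_X)$, $r\in R$, and for each $p\in\mathrm{dom}(f\delta_X)$: (1) $S_p:=\{r\in R:\delta_{\mathbb S}F_2\langle p,r\rangle=0\}$ is non-empty and $\mu_R(S_p)\in I$; (2) $\delta_YF_1\langle p,r\rangle\in f\delta_X(p)$ for all $r\in S_p$. *)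

(* Defs.v *)
From Stdlib Require Import Reals List Arith.
Import ListNotations.
Open Scope R_scope.

Definition baire := nat -> nat.

Definition pairB (p q : baire) : baire :=
  fun n => if Nat.even n then p (Nat.div2 n) else q (Nat.div2 n).

Definition prefix (p : baire) (k : nat) : list nat := map p (seq 0 k).

Definition pairN (a b : nat) : nat := ((a + b) * (a + b + 1) / 2 + b)%nat.
Fixpoint code_list (l : list nat) : nat :=
  match l with
  | [] => 0%nat
  | x :: l' => S (pairN x (code_list l'))
  end.

Inductive recf : Type :=
| RZero : recf
| RSucc : recf
| RProj : nat -> recf
| RComp : recf -> list recf -> recf
| RPrim : recf -> recf -> recf
| RMu : recf -> recf.

Inductive eval : recf -> list nat -> nat -> Prop :=
| e_zero l : eval RZero l 0
| e_succ l : eval RSucc l (S (hd 0%nat l))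
| e_proj i l : eval (RProj i) l (nth i l 0%nat)
| e_comp f gs l vs v : eval_list gs l vs -> eval f vs v -> eval (RComp f gs) l v
| e_prim0 f g l v : eval f l v -> eval (RPrim f g) (0%nat :: l) v
| e_primS f g n l r v :
    eval (RPrim f g) (n :: l) r -> eval g (n :: r :: l) v ->
    eval (RPrim f g) (S n :: l) v
| e_mu f l n :
    eval f (n :: l) 0%nat ->
    (forall m, (m < n)%nat -> exists k, eval f (m :: l) (S k)) ->
    eval (RMu f) l n
with eval_list : list recf -> list nat -> list nat -> Prop :=
| el_nil l : eval_list [] l []
| el_cons g gs l v vs :
    eval g l v -> eval_list gs l vs -> eval_list (g :: gs) l (v :: vs).

Definition computable_nat (h : nat -> nat) : Prop :=
  exists c : recf, forall n, eval c [n] (h n).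

Definition pfun := baire -> baire -> Prop.

Definition functional (F : pfun) : Prop :=
  forall p q1 q2, F p q1 -> F p q2 -> q1 = q2.

(** The partial function eta_h : N^N -> N^N coded by the associate h:
    eta_h(q)(n) = h(<n, q[0..k)>) - 1 for the least k with h(<n,q[0..k)>) > 0. *)
Definition assoc_eval (h : baire) : pfun :=
  fun q r => forall n, exists k,
    (0 < h (pairN n (code_list (prefix q k))))%nat /\
    (forall j, (j < k)%nat -> h (pairN n (code_list (prefix q j))) = 0%nat) /\
    r n = (h (pairN n (code_list (prefix q k))) - 1)%nat.

Definition computable (F : pfun) : Prop :=
  exists h, computable_nat h /\ forall p q, F p q -> assoc_eval h p q.

Definition rep (X : Type) := baire -> X -> Prop.

Definition is_rep {X : Type} (d : rep X) : Prop :=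
  (forall p x y, d p x -> d p y -> x = y) /\ (forall x, exists p, d p x).

(** F realizes the multi-valued f : ⊆ X ⇉ Y  (dom f = {x | exists y, f x y}) *)
Definition realizes {X Y : Type} (dX : rep X) (dY : rep Y)
  (f : X -> Y -> Prop) (F : pfun) : Prop :=
  forall p x, dX p x -> (exists y, f x y) ->
    exists q y, F p q /\ dY q y /\ f x y.

Definition weihrauch {X Y Z W : Type} (dX : rep X) (dY : rep Y)
  (f : X -> Y -> Prop) (dZ : rep Z) (dW : rep W) (g : Z -> W -> Prop) : Prop :=
  exists H K : pfun, computable H /\ computable K /\
    forall G : pfun, functional G -> realizes dZ dW g G ->
      realizes dX dY f
        (fun p r => exists k s, K p k /\ G k s /\ H (pairB p s) r).

Definition deltaS : rep bool :=
  fun p b => (b = false /\ forall n, p n = 0%nat) \/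
             (b = true /\ exists n, p n <> 0%nat).

Definition deltaFunS {X : Type} (dX : rep X) : rep (X -> bool) :=
  fun p phi => realizes dX deltaS (fun x b => phi x = b) (assoc_eval p).

(** A_-(X): a name of A is a name of the characteristic function of X \ A *)
Definition deltaA {X : Type} (dX : rep X) : rep (X -> Prop) :=
  fun p A => exists chi, deltaFunS dX p chi /\
                         forall x, chi x = true <-> ~ A x.

Definition sub (R : baire -> Prop) := { r : baire | R r }.
Definition deltaSub (R : baire -> Prop) : rep (sub R) :=
  fun p r => proj1_sig r = p.

Definition closedR {R : baire -> Prop} (A : sub R -> Prop) : Prop :=
  forall r, ~ A r -> exists n, forall r',
    prefix (proj1_sig r') n = prefix (proj1_sig r) n -> ~ A r'.

Inductive borel (R : baire -> Prop) : (sub R -> Prop) -> Prop :=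
| b_cyl (s : list nat) :
    borel R (fun r => prefix (proj1_sig r) (length s) = s)
| b_compl A : borel R A -> borel R (fun r => ~ A r)
| b_union (A : nat -> sub R -> Prop) :
    (forall n, borel R (A n)) -> borel R (fun r => exists n, A n r)
| b_ext A B : borel R A -> (forall r, A r <-> B r) -> borel R B.

Inductive ereal : Type := EFin (x : R) | EInf.

Definition ele (a b : ereal) : Prop :=
  match a, b with
  | EFin x, EFin y => x <= y
  | _, EInf => True
  | EInf, EFin _ => False
  end.

Definition eadd (a b : ereal) : ereal :=
  match a, b with
  | EFin x, EFin y => EFin (x + y)
  | _, _ => EInf
  end.

Fixpoint psum (a : nat -> ereal) (n : nat) : ereal :=
  match n with
  | O => EFin 0
  | S m => eadd (psum a m) (a m)
  end.

Definition esum (a : nat -> ereal) (s : ereal) : Prop :=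
  (forall n, ele (psum a n) s) /\
  (forall b, (forall n, ele (psum a n) b) -> ele s b).

Definition borel_measure (R : baire -> Prop) (mu : (sub R -> Prop) -> ereal) : Prop :=
  (forall A B, (forall r, A r <-> B r) -> mu A = mu B) /\
  (forall A, borel R A -> ele (EFin 0) (mu A)) /\
  mu (fun _ => False) = EFin 0 /\
  (forall A : nat -> sub R -> Prop,
     (forall n, borel R (A n)) ->
     (forall n m r, n <> m -> A n r -> A m r -> False) ->
     esum (fun n => mu (A n)) (mu (fun r => exists n, A n r))).

Record interval : Type := mkInterval {
  lo : R; lo_closed : bool; hi : ereal; hi_closed : bool }.

Definition interval_wf (I : interval) : Prop := ele (EFin (lo I)) (hi I).

Definition in_interval (I : interval) (v : ereal) : Prop :=
  (match v with
   | EFin x => if lo_closed I then lo I <= x else lo I < x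
   | EInf => True
   end) /\
  (match hi I, v with
   | EFin h, EFin x => if hi_closed I then x <= h else x < h
   | EFin _, EInf => False
   | EInf, EFin _ => True
   | EInf, EInf => hi_closed I = true
   end).

Definition PC (R : baire -> Prop) (mu : (sub R -> Prop) -> ereal) (I : interval)
  (A : sub R -> Prop) (x : sub R) : Prop :=
  closedR A /\ (exists y, A y) /\ in_interval I (mu A) /\ A x.

Definition las_vegas {X Y : Type} (dX : rep X) (dY : rep Y) (f : X -> Y -> Prop)
  (R : baire -> Prop) (mu : (sub R -> Prop) -> ereal) (I : interval) : Prop :=
  exists F1 F2 : pfun, computable F1 /\ computable F2 /\
    forall p x, dX p x -> (exists y, f x y) ->
      let S := fun r : sub R =>
        exists q, F2 (pairB p (proj1_sig r)) q /\ forall n, q n = 0%nat in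
      (forall r : baire, R r -> exists q, F2 (pairB p r) q) /\
      (exists r, S r) /\ in_interval I (mu S) /\
      (forall r, S r -> exists q y, F1 (pairB p (proj1_sig r)) q /\ dY q y /\ f x y).

(* Main.v *)
Require Import Defs.
From Stdlib Require Import List Arith Lia PeanoNat Classical.
Import ListNotations.
Local Open Scope nat_scope.

Definition PR (n : nat) (f : list nat -> nat) : Prop :=
  exists c, forall l, length l = n -> eval c l (f l).

Lemma PR_ext n f g : (forall l, length l = n -> f l = g l) -> PR n f -> PR n g.
Proof. intros H [c Hc]. exists c. intros l Hl. rewrite <- H by auto. auto. Qed.

Lemma PR_proj n i : PR n (fun l => nth i l 0).
Proof. exists (RProj i). intros. constructor. Qed.

Lemma PR_succ n a : PR n a -> PR n (fun l => S (a l)).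
Proof.
  intros [c Hc]. exists (RComp RSucc [c]). intros l Hl.
  econstructor. constructor. apply Hc; auto. constructor. constructor.
Qed.

Lemma PR_const n k : PR n (fun _ => k).
Proof.
  induction k. exists RZero. intros; constructor.
  apply (PR_succ n (fun _ => k)); auto.
Qed.

Lemma PR_comp_list n gs : Forall (PR n) gs ->
  exists cs, forall l, length l = n -> eval_list cs l (map (fun h => h l) gs).
Proof.
  induction 1. exists []. intros; constructor.
  destruct H as [c Hc]. destruct IHForall as [cs Hcs]. exists (c :: cs).
  intros; simpl; constructor; auto.
Qed.

Lemma PR_comp m n g gs : PR m g -> Forall (PR n) gs -> length gs = m ->
  PR n (fun l => g (map (fun h => h l) gs)).
Proof.
  intros [c Hc] Hgs Hlen. destruct (PR_comp_list _ _ Hgs) as [cs Hcs].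
  exists (RComp c cs). intros l Hl. econstructor. apply Hcs; auto.
  apply Hc. rewrite length_map; auto.
Qed.

Lemma PR_prim n f g : PR n f -> PR (S (S n)) g ->
  PR (S n) (fun l => nat_rect (fun _ => nat) (f (tl l)) (fun i r => g (i :: r :: tl l)) (hd 0 l)).
Proof.
  intros [cf Hf] [cg Hg]. exists (RPrim cf cg). intros [|x l] Hl; simpl in Hl; [discriminate|].
  injection Hl as Hl. simpl. induction x; simpl.
  - constructor. auto.
  - econstructor. apply IHx. apply Hg. simpl; auto.
Qed.

Definition projs (k n : nat) : list (list nat -> nat) := map (fun i l => nth i l 0) (seq k n).

Lemma projs_PR k n m : Forall (PR m) (projs k n).
Proof.
  unfold projs. apply Forall_forall. intros x Hx. apply in_map_iff in Hx.
  destruct Hx as [i [<- _]]. apply PR_proj.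
Qed.

Lemma map_nth_app (l0 l : list nat) :
  map (fun i => nth i (l0 ++ l) 0) (seq (length l0) (length l)) = l.
Proof.
  revert l0. induction l as [|a l IH]; intros l0; simpl; auto.
  rewrite app_nth2 by lia. rewrite Nat.sub_diag. simpl. f_equal.
  specialize (IH (l0 ++ [a])). rewrite <- app_assoc in IH. simpl in IH.
  rewrite length_app in IH. simpl in IH. rewrite Nat.add_1_r in IH. exact IH.
Qed.

Lemma map_projs l0 l : map (fun h => h (l0 ++ l)) (projs (length l0) (length l)) = l.
Proof. unfold projs. rewrite map_map. apply map_nth_app. Qed.

Lemma map_projs0 l : map (fun h => h l) (projs 0 (length l)) = l.
Proof. apply (map_projs [] l). Qed.

Lemma map_projs2 a b l : map (fun h => h (a :: b :: l)) (projs 2 (length l)) = l.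
Proof. apply (map_projs [a;b] l). Qed.

Lemma map_projs1 a l : map (fun h => h (a :: l)) (projs 1 (length l)) = l.
Proof. apply (map_projs [a] l). Qed.

Lemma length_projs k n : length (projs k n) = n.
Proof. unfold projs. rewrite length_map, length_seq. auto. Qed.

Lemma PR_rec n e f g : PR n e -> PR n f -> PR (S (S n)) g ->
  PR n (fun l => nat_rect (fun _ => nat) (f l) (fun i r => g (i :: r :: l)) (e l)).
Proof.
  intros He Hf Hg. pose proof (PR_prim n f g Hf Hg) as Hp.
  eapply PR_ext; [| apply (PR_comp (S n) n _ (e :: projs 0 n) Hp)].
  - intros l Hl. simpl. subst n. rewrite map_projs0. reflexivity.
  - constructor; auto. apply projs_PR.
  - simpl. rewrite length_projs. auto.
Qed.

Lemma PR_shift2 n b : PR n b -> PR (S (S n)) (fun l => b (skipn 2 l)).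
Proof.
  intros Hb. eapply PR_ext; [| apply (PR_comp n (S (S n)) b (projs 2 n) Hb)].
  - intros [|x [|y l]] Hl; simpl in Hl; try discriminate. injection Hl as Hl. subst n.
    rewrite map_projs2. reflexivity.
  - apply projs_PR.
  - apply length_projs.
Qed.

Lemma PR_cons_shift2 n P a : PR (S n) P -> PR (S (S n)) a ->
  PR (S (S n)) (fun l => P (a l :: skipn 2 l)).
Proof.
  intros HP Ha. eapply PR_ext; [| apply (PR_comp (S n) (S (S n)) P (a :: projs 2 n) HP)].
  - intros [|x [|y l]] Hl; simpl in Hl; try discriminate. injection Hl as Hl. subst n.
    simpl. rewrite map_projs2. reflexivity.
  - constructor; auto. apply projs_PR.
  - simpl; rewrite length_projs; auto.
Qed.

Lemma PR_cons n P a : PR (S n) P -> PR n a -> PR n (fun l => P (a l :: l)).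
Proof.
  intros HP Ha. eapply PR_ext; [| apply (PR_comp (S n) n P (a :: projs 0 n) HP)].
  - intros l Hl. subst n. simpl. rewrite map_projs0. reflexivity.
  - constructor; auto. apply projs_PR.
  - simpl; rewrite length_projs; auto.
Qed.

Lemma PR_add n a b : PR n a -> PR n b -> PR n (fun l => a l + b l).
Proof.
  intros Ha Hb.
  eapply PR_ext; [| apply (PR_rec n a b (fun l => S (nth 1 l 0)) Ha Hb (PR_succ _ _ (PR_proj _ 1)))].
  intros l _. simpl. induction (a l); simpl; auto.
Qed.

Lemma PR_pred n a : PR n a -> PR n (fun l => pred (a l)).
Proof.
  intros Ha.
  eapply PR_ext; [| apply (PR_rec n a (fun _ => 0) (fun l => nth 0 l 0) Ha (PR_const _ 0) (PR_proj _ 0))].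
  intros l _. simpl. destruct (a l); simpl; auto.
Qed.

Lemma PR_sub n a b : PR n a -> PR n b -> PR n (fun l => a l - b l).
Proof.
  intros Ha Hb.
  eapply PR_ext; [| apply (PR_rec n b a (fun l => pred (nth 1 l 0)) Hb Ha (PR_pred _ _ (PR_proj _ 1)))].
  intros l _. simpl. induction (b l); simpl. lia. rewrite IHn0. lia.
Qed.

Lemma PR_mul n a b : PR n a -> PR n b -> PR n (fun l => a l * b l).
Proof.
  intros Ha Hb.
  eapply PR_ext; [| apply (PR_rec n a (fun _ => 0) (fun l => b (skipn 2 l) + nth 1 l 0) Ha (PR_const _ 0)
     (PR_add _ _ _ (PR_shift2 _ _ Hb) (PR_proj _ 1)))].
  intros l _. simpl. induction (a l); simpl; auto.
Qed.

Lemma PR_ifz n c a b : PR n c -> PR n a -> PR n b ->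
  PR n (fun l => if c l =? 0 then a l else b l).
Proof.
  intros Hc Ha Hb.
  eapply PR_ext; [| apply (PR_rec n c a (fun l => b (skipn 2 l)) Hc Ha (PR_shift2 _ _ Hb))].
  intros l _. simpl. destruct (c l); simpl; auto.
Qed.

Lemma PR_call n h a : computable_nat h -> PR n a -> PR n (fun l => h (a l)).
Proof.
  intros [c Hc] [ca Ha]. exists (RComp c [ca]). intros l Hl.
  econstructor. constructor. apply Ha; auto. constructor. apply Hc.
Qed.

Definition Tn (x : nat) : nat := nat_rect (fun _ => nat) 0 (fun i r => r + (i + 1)) x.

Lemma PR_Tn n a : PR n a -> PR n (fun l => Tn (a l)).
Proof.
  intros Ha. unfold Tn.
  apply (PR_rec n a (fun _ => 0) (fun l => nth 1 l 0 + (nth 0 l 0 + 1)) Ha (PR_const _ 0)).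
  apply PR_add. apply PR_proj. apply PR_add. apply PR_proj. apply PR_const.
Qed.

Lemma Tn_eq x : Tn x = x * (x + 1) / 2.
Proof.
  induction x. reflexivity.
  change (Tn (S x)) with (Tn x + (x + 1)). rewrite IHx. replace (S x * (S x + 1)) with (x * (x + 1) + (x + 1) * 2) by lia.
  rewrite Nat.div_add by lia. lia.
Qed.

Lemma pairN_Tn a b : pairN a b = Tn (a + b) + b.
Proof. unfold pairN. rewrite Tn_eq. reflexivity. Qed.

Lemma PR_pairN n a b : PR n a -> PR n b -> PR n (fun l => pairN (a l) (b l)).
Proof.
  intros Ha Hb. eapply PR_ext; [| apply PR_add; [apply PR_Tn; apply PR_add; [exact Ha|exact Hb] | exact Hb]].
  intros l _. rewrite pairN_Tn. reflexivity.
Qed.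

Definition bmin (P : nat -> nat) (b : nat) : nat :=
  nat_rect (fun _ => nat) 0 (fun k r => if k - r =? 0 then (if P k =? 0 then S k else k) else r) b.

Definition buildc (f : nat -> nat) (b : nat) : nat :=
  nat_rect (fun _ => nat) 0 (fun s r => S (pairN (f (b - S s)) r)) b.

Lemma buildc_eq f b : buildc f b = code_list (map f (seq 0 b)).
Proof.
  unfold buildc.
  assert (forall s, s <= b -> nat_rect (fun _ => nat) 0 (fun s r => S (pairN (f (b - S s)) r)) s
           = code_list (map f (seq (b - s) s))).
  { induction s; intros Hs. reflexivity. simpl. rewrite IHs by lia.
    replace (b - S s) with (b - S s) by reflexivity.
    replace (S (b - S s)) with (b - s) by lia. reflexivity. }
  rewrite H by lia. rewrite Nat.sub_diag. reflexivity.
Qed.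
Inductive ex : Type :=
| EVar (i : nat) | EConst (k : nat)
| EAdd (a b : ex) | ESub (a b : ex) | EMul (a b : ex)
| EIfz (c a b : ex)
| ECall (h : nat -> nat) (a : ex)
| ERec (e f g : ex)
| EMin (b P : ex)
| EBuild (b P : ex)
| ELet (a body : ex)
| EApp1 (f a : ex) | EApp2 (f a b : ex) | EApp3 (f a b c : ex).

Fixpoint den (e : ex) (l : list nat) : nat :=
  match e with
  | EVar i => nth i l 0
  | EConst k => k
  | EAdd a b => den a l + den b l
  | ESub a b => den a l - den b l
  | EMul a b => den a l * den b l
  | EIfz c a b => if den c l =? 0 then den a l else den b l
  | ECall h a => h (den a l)
  | ERec e f g => nat_rect (fun _ => nat) (den f l) (fun i r => den g (i :: r :: l)) (den e l)
  | EMin b P => bmin (fun y => den P (y :: l)) (den b l)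
  | EBuild b P => code_list (map (fun t => den P (t :: l)) (seq 0 (den b l)))
  | ELet a body => den body (den a l :: l)
  | EApp1 f a => den f [den a l]
  | EApp2 f a b => den f [den a l; den b l]
  | EApp3 f a b c => den f [den a l; den b l; den c l]
  end.

Fixpoint wf (n : nat) (e : ex) : Prop :=
  match e with
  | EVar i => True
  | EConst _ => True
  | EAdd a b | ESub a b | EMul a b => wf n a /\ wf n b
  | EIfz c a b => wf n c /\ wf n a /\ wf n b
  | ECall h a => computable_nat h /\ wf n a
  | ERec e f g => wf n e /\ wf n f /\ wf (S (S n)) g
  | EMin b P | EBuild b P => wf n b /\ wf (S n) P
  | ELet a body => wf n a /\ wf (S n) body
  | EApp1 f a => wf 1 f /\ wf n a
  | EApp2 f a b => wf 2 f /\ wf n a /\ wf n b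
  | EApp3 f a b c => wf 3 f /\ wf n a /\ wf n b /\ wf n c
  end.

Lemma PR_list_comp m n g gs : PR m g -> Forall (PR n) gs -> length gs = m ->
  PR n (fun l => g (map (fun h => h l) gs)).
Proof. apply PR_comp. Qed.

Theorem compile e : forall n, wf n e -> PR n (den e).
Proof.
  induction e; intros n Hw; simpl in Hw; simpl.
  - apply PR_proj.
  - apply PR_const.
  - destruct Hw. apply PR_add; auto.
  - destruct Hw. apply PR_sub; auto.
  - destruct Hw. apply PR_mul; auto.
  - destruct Hw as [? [? ?]]. apply PR_ifz; auto.
  - destruct Hw. apply PR_call; auto.
  - destruct Hw as [? [? ?]]. apply PR_rec; auto.
  - destruct Hw as [Hb HP]. unfold bmin.
    eapply PR_ext; [| apply (PR_rec n (den e1) (fun _ => 0)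
      (fun l' => if nth 0 l' 0 - nth 1 l' 0 =? 0 then
         (if den e2 (nth 0 l' 0 :: skipn 2 l') =? 0 then S (nth 0 l' 0) else nth 0 l' 0)
         else nth 1 l' 0))].
    + intros; reflexivity.
    + auto.
    + apply PR_const.
    + apply PR_ifz. apply PR_sub; apply PR_proj.
      apply PR_ifz. apply PR_cons_shift2. auto. apply PR_proj.
      apply PR_succ, PR_proj. apply PR_proj. apply PR_proj.
  - destruct Hw as [Hb HP].
    eapply PR_ext; [| apply (PR_rec n (den e1) (fun _ => 0)
      (fun l' => S (pairN (den e2 ((den e1 (skipn 2 l') - S (nth 0 l' 0)) :: skipn 2 l')) (nth 1 l' 0))))].
    + intros l _. rewrite <- buildc_eq. reflexivity.
    + auto.
    + apply PR_const.
    + apply PR_succ. apply PR_pairN. apply PR_cons_shift2. auto.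
      apply PR_sub. apply PR_shift2; auto. apply PR_succ, PR_proj. apply PR_proj.
  - destruct Hw. apply (PR_cons n (den e2) (den e1)); auto.
  - destruct Hw.
    eapply PR_ext; [| apply (PR_comp 1 n (den e1) [den e2]); auto].
    intros; reflexivity.
  - destruct Hw as [? [? ?]].
    eapply PR_ext; [| apply (PR_comp 2 n (den e1) [den e2; den e3]); auto].
    intros; reflexivity.
  - destruct Hw as [? [? [? ?]]].
    eapply PR_ext; [| apply (PR_comp 3 n (den e1) [den e2; den e3; den e4]); auto].
    intros; reflexivity.
Qed.

Lemma compile_nat e : wf 1 e -> computable_nat (fun x => den e [x]).
Proof.
  intros H. destruct (compile e 1 H) as [c Hc]. exists c. intros n. apply (Hc [n]). reflexivity.
Qed.
Lemma bmin_S P b : bmin P (S b) =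
  (if b - bmin P b =? 0 then (if P b =? 0 then S b else b) else bmin P b).
Proof. reflexivity. Qed.

Lemma bmin_spec P b : (bmin P b = b /\ forall y, y < b -> P y = 0) \/
  (bmin P b < b /\ P (bmin P b) <> 0 /\ forall y, y < bmin P b -> P y = 0).
Proof.
  induction b. left. split. reflexivity. intros; lia.
  rewrite bmin_S. destruct IHb as [[H1 H2]|[H1 [H2 H3]]].
  - rewrite H1, Nat.sub_diag. simpl. destruct (P b) eqn:E; simpl.
    + left. split; auto. intros y Hy. destruct (Nat.eq_dec y b). subst; auto. apply H2; lia.
    + right. split. lia. split. rewrite E; auto. auto.
  - replace (b - bmin P b =? 0) with false. right. split. lia. auto.
    symmetry. apply Nat.eqb_neq. lia.
Qed.

Lemma bmin_eq P b s : s < b -> P s <> 0 -> (forall y, y < s -> P y = 0) -> bmin P b = s.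
Proof.
  intros Hs HP Hy. destruct (bmin_spec P b) as [[H1 H2]|[H1 [H2 H3]]].
  - exfalso. apply HP. apply H2. auto.
  - destruct (lt_eq_lt_dec (bmin P b) s) as [[H|H]|H]; auto.
    + exfalso. apply H2. apply Hy. auto.
    + exfalso. apply HP. apply H3. auto.
Qed.

Lemma bmin_found P b : bmin P b < b -> P (bmin P b) <> 0 /\ (forall y, y < bmin P b -> P y = 0).
Proof. intros H. destruct (bmin_spec P b) as [[H1 H2]|[H1 [H2 H3]]]. lia. auto. Qed.

Lemma bmin_none P b : ~ bmin P b < b -> forall y, y < b -> P y = 0.
Proof. intros H. destruct (bmin_spec P b) as [[H1 H2]|[H1 [H2 H3]]]. auto. lia. Qed.

Definition ltn (a b : nat) : nat := if b - a =? 0 then 0 else 1.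
Lemma ltn_1 a b : a < b -> ltn a b = 1.
Proof. intros. unfold ltn. destruct (Nat.eqb_spec (b - a) 0); auto. lia. Qed.
Lemma ltn_0 a b : b <= a -> ltn a b = 0.
Proof. intros. unfold ltn. destruct (Nat.eqb_spec (b - a) 0); auto. lia. Qed.
Lemma ltn_cases a b : (a < b /\ ltn a b = 1) \/ (b <= a /\ ltn a b = 0).
Proof. destruct (lt_dec a b). left; split; auto; apply ltn_1; auto. right; split. lia. apply ltn_0; lia. Qed.

Definition xlt (a b : ex) : ex := EIfz (ESub b a) (EConst 0) (EConst 1).
Lemma den_xlt a b l : den (xlt a b) l = ltn (den a l) (den b l).
Proof. reflexivity. Qed.

Definition Tb := ERec (EVar 0) (EConst 0) (EAdd (EVar 1) (EAdd (EVar 0) (EConst 1))).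
Definition xT a := EApp1 Tb a.
Lemma den_xT a l : den (xT a) l = Tn (den a l).
Proof. reflexivity. Qed.

Definition us (m : nat) : nat := bmin (fun s => ltn m (Tn (s + 1))) (m + 2).
Definition usB := EMin (EAdd (EVar 0) (EConst 2)) (xlt (EVar 1) (xT (EAdd (EVar 0) (EConst 1)))).
Definition sndU m := m - Tn (us m).
Definition fstU m := us m - sndU m.
Definition sndB := ESub (EVar 0) (xT (EApp1 usB (EVar 0))).
Definition fstB := ESub (EApp1 usB (EVar 0)) (EApp1 sndB (EVar 0)).
Definition xFst a := EApp1 fstB a.
Definition xSnd a := EApp1 sndB a.
Lemma den_xFst a l : den (xFst a) l = fstU (den a l).
Proof. reflexivity. Qed.
Lemma den_xSnd a l : den (xSnd a) l = sndU (den a l).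
Proof. reflexivity. Qed.

Lemma Tn_S x : Tn (S x) = Tn x + (x + 1).
Proof. reflexivity. Qed.
Lemma Tn_mono a b : a <= b -> Tn a <= Tn b.
Proof. induction 1. auto. rewrite Tn_S. lia. Qed.
Lemma Tn_ge x : x <= Tn x.
Proof. induction x. auto. rewrite Tn_S. lia. Qed.

Lemma us_pair a b : us (pairN a b) = a + b.
Proof.
  rewrite pairN_Tn. unfold us. apply bmin_eq.
  - pose proof (Tn_ge (a + b)). lia.
  - rewrite ltn_1. auto. rewrite Nat.add_1_r, Tn_S. lia.
  - intros y Hy. apply ltn_0. rewrite Nat.add_1_r. pose proof (Tn_mono (S y) (a + b)). lia.
Qed.

Lemma sndU_pair a b : sndU (pairN a b) = b.
Proof. unfold sndU. rewrite us_pair, pairN_Tn. lia. Qed.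
Lemma fstU_pair a b : fstU (pairN a b) = a.
Proof. unfold fstU. rewrite us_pair, sndU_pair. lia. Qed.

Definition hdc c := fstU (c - 1).
Definition tlc c := sndU (c - 1).
Definition xHd a := xFst (ESub a (EConst 1)).
Definition xTl a := xSnd (ESub a (EConst 1)).
Lemma den_xHd a l : den (xHd a) l = hdc (den a l).
Proof. reflexivity. Qed.
Lemma den_xTl a l : den (xTl a) l = tlc (den a l).
Proof. reflexivity. Qed.

Lemma hdc_cons x l : hdc (code_list (x :: l)) = x.
Proof. unfold hdc. simpl. rewrite Nat.sub_0_r. apply fstU_pair. Qed.
Lemma tlc_cons x l : tlc (code_list (x :: l)) = code_list l.
Proof. unfold tlc. simpl. rewrite Nat.sub_0_r. apply sndU_pair. Qed.
Lemma tlc_0 : tlc 0 = 0.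
Proof. reflexivity. Qed.
Lemma hdc_0 : hdc 0 = 0.
Proof. vm_compute. reflexivity. Qed.
Lemma tlc_code l : tlc (code_list l) = code_list (tl l).
Proof. destruct l. apply tlc_0. apply tlc_cons. Qed.
Lemma hdc_code l : hdc (code_list l) = hd 0 l.
Proof. destruct l. apply hdc_0. apply hdc_cons. Qed.

Definition tlcn i c := nat_rect (fun _ => nat) c (fun _ r => tlc r) i.
Definition tlnB := ERec (EVar 0) (EVar 1) (xTl (EVar 1)).
Definition xTln i c := EApp2 tlnB i c.
Lemma den_xTln i c l : den (xTln i c) l = tlcn (den i l) (den c l).
Proof. reflexivity. Qed.

Lemma skipn_S_tl {A} i (l : list A) : skipn (S i) l = tl (skipn i l).
Proof. revert l; induction i; intros [|x l]; simpl; auto. rewrite <- IHi. destruct l; auto. Qed.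

Lemma tlcn_code i l : tlcn i (code_list l) = code_list (skipn i l).
Proof.
  induction i. reflexivity. change (tlcn (S i) (code_list l)) with (tlc (tlcn i (code_list l))).
  rewrite IHi, tlc_code, skipn_S_tl. reflexivity.
Qed.

Definition nthc i c := hdc (tlcn i c).
Definition xNth i c := xHd (xTln i c).
Lemma den_xNth i c l : den (xNth i c) l = nthc (den i l) (den c l).
Proof. reflexivity. Qed.

Lemma hd_skipn i (l : list nat) : hd 0 (skipn i l) = nth i l 0.
Proof. revert l; induction i; intros [|x l]; simpl; auto. Qed.

Lemma nthc_code i l : nthc i (code_list l) = nth i l 0.
Proof. unfold nthc. rewrite tlcn_code, hdc_code. apply hd_skipn. Qed.

Definition lenc c := bmin (fun i => if tlcn i c =? 0 then 1 else 0) (c + 1).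
Definition lenB := EMin (EAdd (EVar 0) (EConst 1)) (EIfz (xTln (EVar 0) (EVar 1)) (EConst 1) (EConst 0)).
Definition xLen a := EApp1 lenB a.
Lemma den_xLen a l : den (xLen a) l = lenc (den a l).
Proof. reflexivity. Qed.

Lemma code_0 l : code_list l = 0 -> l = [].
Proof. destruct l; simpl; auto. discriminate. Qed.
Lemma code_ge_length l : length l <= code_list l.
Proof. induction l; simpl; auto. rewrite pairN_Tn. lia. Qed.

Lemma lenc_code l : lenc (code_list l) = length l.
Proof.
  unfold lenc. apply bmin_eq.
  - pose proof (code_ge_length l); lia.
  - rewrite tlcn_code, skipn_all2 by lia. simpl. discriminate.
  - intros y Hy. rewrite tlcn_code. destruct (code_list (skipn y l)) eqn:E; auto.
    apply code_0 in E. apply (f_equal (@length nat)) in E. rewrite length_skipn in E. simpl in E. lia.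
Qed.

Definition oddn x := nat_rect (fun _ => nat) 0 (fun _ r => 1 - r) x.
Definition oddB := ERec (EVar 0) (EConst 0) (ESub (EConst 1) (EVar 1)).
Definition xOdd a := EApp1 oddB a.
Lemma den_xOdd a l : den (xOdd a) l = oddn (den a l).
Proof. reflexivity. Qed.
Definition halfn x := nat_rect (fun _ => nat) 0 (fun i r => r + oddn i) x.
Definition halfB := ERec (EVar 0) (EConst 0) (EAdd (EVar 1) (xOdd (EVar 0))).
Definition xHalf a := EApp1 halfB a.
Lemma den_xHalf a l : den (xHalf a) l = halfn (den a l).
Proof. reflexivity. Qed.

Lemma oddhalf k : oddn (2*k) = 0 /\ halfn (2*k) = k /\ oddn (2*k+1) = 1 /\ halfn (2*k+1) = k.
Proof.
  induction k. repeat split; reflexivity.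
  destruct IHk as [H1 [H2 [H3 H4]]].
  assert (E1 : 2 * S k = S (2*k+1)) by lia.
  assert (E2 : 2 * S k + 1 = S (S (2*k+1))) by lia.
  assert (Ho : forall x, oddn (S x) = 1 - oddn x) by reflexivity.
  assert (Hh : forall x, halfn (S x) = halfn x + oddn x) by reflexivity.
  rewrite E2, E1, !Ho, !Hh, Ho, H3, H4. simpl. lia.
Qed.

Lemma oddn_even t : oddn t = if Nat.even t then 0 else 1.
Proof.
  destruct (Nat.Even_or_Odd t) as [[k ->]|[k ->]]; pose proof (oddhalf k) as [? [? [? ?]]].
  rewrite Nat.even_even. auto. rewrite Nat.even_odd. auto.
Qed.
Lemma halfn_div2 t : halfn t = Nat.div2 t.
Proof.
  destruct (Nat.Even_or_Odd t) as [[k ->]|[k ->]]; pose proof (oddhalf k) as [? [? [? ?]]].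
  rewrite Nat.div2_double. auto. rewrite Nat.div2_odd'. auto.
Qed.

Definition xPair a b := EApp2 (EAdd (xT (EAdd (EVar 0) (EVar 1))) (EVar 1)) a b.
Lemma den_xPair a b l : den (xPair a b) l = pairN (den a l) (den b l).
Proof. simpl. rewrite pairN_Tn. reflexivity. Qed.
Lemma bmin_ext P Q b : (forall y, y < b -> P y = Q y) -> bmin P b = bmin Q b.
Proof.
  induction b; intros H. reflexivity. rewrite !bmin_S. rewrite IHb by (intros; apply H; lia).
  rewrite H by lia. reflexivity.
Qed.

Lemma bmin_all0 P b : (forall y, y < b -> P y = 0) -> bmin P b = b.
Proof. intros H. destruct (bmin_spec P b) as [[H1 H2]|[H1 [H2 H3]]]. auto. exfalso. apply H2. apply H. auto. Qed.

Definition sA (h : nat -> nat) (n : nat) (g : nat -> nat) (B : nat) : nat :=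
  let i0 := bmin (fun i => ltn 0 (h (pairN n (code_list (prefix g i))))) B in
  if ltn i0 B =? 0 then 0 else h (pairN n (code_list (prefix g i0))).

Lemma sA_lt h n g B i : 0 < h (pairN n (code_list (prefix g i))) ->
  (forall j, j < i -> h (pairN n (code_list (prefix g j))) = 0) -> i < B ->
  sA h n g B = h (pairN n (code_list (prefix g i))).
Proof.
  intros H1 H2 H3. unfold sA. rewrite (bmin_eq _ B i); auto.
  - rewrite ltn_1 by auto. reflexivity.
  - rewrite ltn_1 by auto. discriminate.
  - intros y Hy. rewrite H2 by auto. reflexivity.
Qed.

Lemma sA_ge h n g B i :
  (forall j, j < i -> h (pairN n (code_list (prefix g j))) = 0) -> B <= i -> sA h n g B = 0.
Proof.
  intros H2 H3. unfold sA. rewrite bmin_all0.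
  - rewrite ltn_0 by auto. reflexivity.
  - intros y Hy. rewrite H2 by lia. reflexivity.
Qed.

Lemma map_prefix (e g : nat -> nat) i : (forall t, t < i -> e t = g t) ->
  map e (seq 0 i) = prefix g i.
Proof.
  intros H. unfold prefix. apply map_ext_in. intros t Ht. apply in_seq in Ht. apply H. lia.
Qed.

Lemma length_prefix g k : length (prefix g k) = k.
Proof. unfold prefix. rewrite length_map, length_seq. auto. Qed.

Lemma nth_prefix g k t : t < k -> nth t (prefix g k) 0 = g t.
Proof. intros. unfold prefix. rewrite nth_indep with (d' := g 0) by (rewrite length_map, length_seq; auto).
  rewrite map_nth, seq_nth; auto. Qed.

Ltac dsimp := repeat (progress (cbn [den nth]) || rewrite den_xFst || rewrite den_xSnd
  || rewrite fstU_pair || rewrite sndU_pair || rewrite den_xlt || rewrite den_xLen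
  || rewrite den_xNth || rewrite den_xHalf || rewrite den_xOdd || rewrite den_xPair
  || rewrite den_xT || rewrite den_xTln || rewrite den_xHd || rewrite den_xTl).

Section DirA.
Variable h2 : nat -> nat.

Definition elemA := EIfz (xOdd (EVar 0)) (xNth (xHalf (EVar 0)) (EVar 2)) (xNth (xHalf (EVar 0)) (EVar 4)).
Definition PA := xlt (EConst 0) (ECall h2 (xPair (EVar 2) (EBuild (EVar 0) elemA))).
Definition kfb2 := ELet (EMin (EAdd (EMul (EConst 2) (xLen (EVar 2))) (EConst 1)) PA)
   (EIfz (xlt (EVar 0) (EAdd (EMul (EConst 2) (xLen (EVar 3))) (EConst 1))) (EConst 0)
      (ECall h2 (xPair (EVar 2) (EBuild (EVar 0) elemA)))).
Definition kfb := EApp3 kfb2 (EVar 0) (xFst (EVar 1)) (xSnd (EVar 1)).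
Definition hKcore := EIfz (xlt (xLen (EVar 1)) (xLen (xSnd (EVar 0))))
   (EAdd (EApp2 kfb (EVar 1) (EVar 0)) (EConst 1)) (EConst 0).
Definition hKA := EApp2 hKcore (xFst (EVar 0)) (xSnd (EVar 0)).

Definition kfA cu m := den kfb [cu; m].
Definition Jm m := lenc (sndU m).
Definition hKfun x := den hKA [x].
Definition kfunP (p : baire) (m : nat) := kfA (code_list (prefix p (Jm m))) m.

Lemma hKfun_comp : computable_nat h2 -> computable_nat hKfun.
Proof. intros H. apply compile_nat. cbn. tauto. Qed.

Lemma hKfun_val m u : hKfun (pairN m (code_list u)) =
  if ltn (length u) (Jm m) =? 0 then S (kfA (code_list u) m) else 0.
Proof.
  unfold hKfun, hKA, hKcore. cbn [den nth].
  dsimp. rewrite lenc_code.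
  unfold Jm, kfA. rewrite Nat.add_1_r. reflexivity.
Qed.
End DirA.
Lemma div2_lt t j : t < 2 * j -> Nat.div2 t < j.
Proof. intros H. pose proof (Nat.div2_odd t). destruct (Nat.odd t); simpl in H0; lia. Qed.

Section DirA2.
Variable h2 : nat -> nat.
Variables (p r : baire) (j n : nat).

Lemma elemA_ok t i : t < 2 * j ->
  den elemA (t :: i :: code_list (prefix p j) :: n :: code_list (prefix r j) :: nil) = pairB p r t.
Proof.
  intros Ht. unfold elemA. dsimp. rewrite !nthc_code, oddn_even, halfn_div2. unfold pairB.
  destruct (Nat.even t); simpl; apply nth_prefix; apply div2_lt; auto.
Qed.

Lemma buildA_ok i : i <= 2 * j ->
  code_list (map (fun t => den elemA (t :: i :: code_list (prefix p j) :: n :: code_list (prefix r j) :: nil)) (seq 0 i))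
  = code_list (prefix (pairB p r) i).
Proof. intros Hi. f_equal. apply map_prefix. intros t Ht. apply elemA_ok. lia. Qed.

Lemma kfA_eq : kfA h2 (code_list (prefix p j)) (pairN n (code_list (prefix r j))) = sA h2 n (pairB p r) (2*j+1).
Proof.
  unfold kfA, kfb, kfb2. dsimp. rewrite lenc_code, length_prefix.
  rewrite (bmin_ext _ (fun i => ltn 0 (h2 (pairN n (code_list (prefix (pairB p r) i))))) (2*j+1))
    by (intros y Hy; unfold PA; dsimp; rewrite buildA_ok by lia; reflexivity).
  unfold sA. cbv zeta.
  set (i0 := bmin (fun i => ltn 0 (h2 (pairN n (code_list (prefix (pairB p r) i))))) (2*j+1)).
  destruct (ltn_cases i0 (2*j+1)) as [[H1 H2]|[H1 H2]]; rewrite H2; cbn [Nat.eqb]; auto.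
  rewrite buildA_ok by lia. reflexivity.
Qed.
End DirA2.
Lemma least_ex (P : nat -> Prop) : (forall k, P k \/ ~ P k) -> (exists k, P k) ->
  exists k, P k /\ forall j, j < k -> ~ P j.
Proof.
  intros Hd [k Hk]. induction k as [k IH] using lt_wf_ind.
  destruct (classic (exists j, j < k /\ P j)) as [[j [Hj1 Hj2]]|Hn].
  - apply (IH j Hj1 Hj2).
  - exists k. split; auto. intros j Hj HP. apply Hn. eauto.
Qed.

Lemma Jm_pair n l : Jm (pairN n (code_list l)) = length l.
Proof. unfold Jm. rewrite sndU_pair, lenc_code. reflexivity. Qed.

Lemma assoc_hK h2 p : assoc_eval (hKfun h2) p (kfunP h2 p).
Proof.
  intros m. exists (Jm m). split; [|split].
  - rewrite hKfun_val, length_prefix, ltn_0 by lia. simpl. lia.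
  - intros j Hj. rewrite hKfun_val, length_prefix, ltn_1 by lia. reflexivity.
  - rewrite hKfun_val, length_prefix, ltn_0 by lia. simpl. rewrite Nat.sub_0_r. reflexivity.
Qed.

Lemma kfunP_eq h2 p r n j : kfunP h2 p (pairN n (code_list (prefix r j))) = sA h2 n (pairB p r) (2*j+1).
Proof. unfold kfunP. rewrite Jm_pair, length_prefix. apply kfA_eq. Qed.

Lemma assoc_kfun h2 p r q : assoc_eval h2 (pairB p r) q -> assoc_eval (kfunP h2 p) r q.
Proof.
  intros Hq n. destruct (Hq n) as [i [Hpos [Hz Hv]]].
  assert (Hval : forall j, kfunP h2 p (pairN n (code_list (prefix r j))) =
     if i <? 2*j+1 then h2 (pairN n (code_list (prefix (pairB p r) i))) else 0).
  { intros j. rewrite kfunP_eq. destruct (Nat.ltb_spec i (2*j+1)).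
    - apply sA_lt; auto.
    - apply (sA_ge _ _ _ _ i); auto. }
  destruct (least_ex (fun j => 0 < kfunP h2 p (pairN n (code_list (prefix r j))))) as [j0 [H1 H2]].
  - intros k. destruct (lt_dec 0 (kfunP h2 p (pairN n (code_list (prefix r k))))); auto.
  - exists i. rewrite Hval. destruct (Nat.ltb_spec i (2*i+1)); lia.
  - exists j0. split; auto. split.
    + intros j Hj. specialize (H2 j Hj). lia.
    + rewrite Hval in *. destruct (i <? 2*j0+1); lia.
Qed.
Lemma pairB_even p r t : pairB p r (2 * t) = p t.
Proof. unfold pairB. rewrite Nat.even_even, Nat.div2_double. reflexivity. Qed.
Lemma pairB_odd p r t : pairB p r (2 * t + 1) = r t.
Proof. unfold pairB. rewrite Nat.even_odd, Nat.div2_odd'. reflexivity. Qed.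

Definition neq1 x := (x - 1) + (1 - x).

Section DirB.
Variable hK : nat -> nat.

Definition elemP := xNth (EMul (EConst 2) (EVar 0)) (EVar 3).
Definition kvb := ELet (EMin (EAdd (EVar 2) (EConst 1))
     (xlt (EConst 0) (ECall hK (xPair (EVar 1) (EBuild (EVar 0) elemP)))))
   (EIfz (xlt (EVar 0) (EAdd (EVar 3) (EConst 1))) (EConst 0)
     (ECall hK (xPair (EVar 1) (EBuild (EVar 0) elemP)))).
Definition elemR := xNth (EAdd (EMul (EConst 2) (EVar 0)) (EConst 1)) (EVar 3).
Definition kvE := EApp3 kvb (xPair (EVar 1) (EBuild (EVar 0) elemR)) (EVar 2)
   (xHalf (EAdd (xLen (EVar 2)) (EConst 1))).
Definition xneq1 a := EApp1 (EAdd (ESub (EVar 0) (EConst 1)) (ESub (EConst 1) (EVar 0))) a.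
Definition h2core := ELet (EMin (EAdd (xHalf (xLen (EVar 1))) (EConst 1)) (xneq1 kvE))
  (ELet kvE (EIfz (xlt (EVar 1) (EAdd (xHalf (xLen (EVar 3))) (EConst 1))) (EConst 0)
     (EIfz (xlt (EConst 1) (EVar 0)) (EConst 0) (ESub (EVar 0) (EConst 1))))).
Definition h2B := EApp2 h2core (xFst (EVar 0)) (xSnd (EVar 0)).
Definition h2fun x := den h2B [x].

Lemma h2fun_comp : computable_nat hK -> computable_nat h2fun.
Proof. intros H. apply compile_nat. cbn. tauto. Qed.

Variables (p r : baire) (L : nat).
Let w := prefix (pairB p r) L.

Lemma elemP_ok t i m' pa : t < pa -> pa <= Nat.div2 (L + 1) ->
  den elemP (t :: i :: m' :: code_list w :: pa :: nil) = p t.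
Proof.
  intros H1 H2. unfold elemP. dsimp. rewrite nthc_code. unfold w. rewrite nth_prefix.
  apply pairB_even. pose proof (Nat.div2_odd (L + 1)). destruct (Nat.odd (L+1)); simpl in H; lia.
Qed.

Lemma kvb_eq m' pa : pa <= Nat.div2 (L + 1) ->
  den kvb [m'; code_list w; pa] = sA hK m' p (pa + 1).
Proof.
  intros Hpa. unfold kvb. dsimp.
  rewrite (bmin_ext _ (fun i => ltn 0 (hK (pairN m' (code_list (prefix p i))))) (pa+1)).
  2:{ intros y Hy. dsimp. do 2 f_equal. f_equal. f_equal. apply map_prefix. intros t Ht.
      apply elemP_ok; lia. }
  unfold sA. cbv zeta.
  set (i0 := bmin (fun i => ltn 0 (hK (pairN m' (code_list (prefix p i))))) (pa+1)).
  destruct (ltn_cases i0 (pa+1)) as [[H1 H2]|[H1 H2]]; rewrite H2; cbn [Nat.eqb]; auto.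
  do 3 f_equal. apply map_prefix. intros t Ht. apply elemP_ok; lia.
Qed.

Lemma elemR_ok t j n : t < j -> j <= Nat.div2 L ->
  den elemR (t :: j :: n :: code_list w :: nil) = r t.
Proof.
  intros H1 H2. unfold elemR. dsimp. rewrite nthc_code. unfold w. rewrite nth_prefix.
  apply pairB_odd. pose proof (Nat.div2_odd L). destruct (Nat.odd L); simpl in H; lia.
Qed.

Lemma kvE_eq y n : y <= Nat.div2 L ->
  den kvE (y :: n :: code_list w :: nil) = sA hK (pairN n (code_list (prefix r y))) p (Nat.div2 (L + 1) + 1).
Proof.
  intros Hy. unfold kvE. dsimp. rewrite lenc_code. replace (length w) with L by (unfold w; symmetry; apply length_prefix). rewrite halfn_div2.
  rewrite (map_prefix _ r y). apply kvb_eq. lia.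
  intros t Ht. apply elemR_ok; lia.
Qed.

Definition KVf n y := sA hK (pairN n (code_list (prefix r y))) p (Nat.div2 (L + 1) + 1).

Lemma h2_eq n : h2fun (pairN n (code_list w)) =
  if ltn (bmin (fun y => neq1 (KVf n y)) (Nat.div2 L + 1)) (Nat.div2 L + 1) =? 0 then 0 else
  (if ltn 1 (KVf n (bmin (fun y => neq1 (KVf n y)) (Nat.div2 L + 1))) =? 0 then 0
   else KVf n (bmin (fun y => neq1 (KVf n y)) (Nat.div2 L + 1)) - 1).
Proof.
  unfold KVf, h2fun, h2B, h2core. dsimp. rewrite lenc_code.
  replace (length w) with L by (unfold w; symmetry; apply length_prefix). rewrite halfn_div2.
  rewrite (bmin_ext _ (fun y => neq1 (sA hK (pairN n (code_list (prefix r y))) p (Nat.div2 (L + 1) + 1))) (Nat.div2 L + 1))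
    by (intros y Hy; unfold xneq1; cbn [den nth]; rewrite kvE_eq by lia; reflexivity).
  cbv zeta.
  set (j0 := bmin (fun y => neq1 (sA hK (pairN n (code_list (prefix r y))) p (Nat.div2 (L + 1) + 1))) (Nat.div2 L + 1)).
  destruct (ltn_cases j0 (Nat.div2 L + 1)) as [[H1 H2]|[H1 H2]]; rewrite H2; cbn [Nat.eqb]; auto.
  rewrite kvE_eq by lia. reflexivity.
Qed.
End DirB.
Lemma bound_ex (Q : nat -> nat -> Prop) : (forall y, exists i, Q y i) ->
  forall N, exists B, forall y, y <= N -> exists i, i <= B /\ Q y i.
Proof.
  intros H N. induction N.
  - destruct (H 0) as [i Hi]. exists i. intros y Hy. assert (y = 0) by lia. subst. eauto.
  - destruct IHN as [B HB]. destruct (H (S N)) as [i Hi]. exists (B + i). intros y Hy.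
    destruct (Nat.eq_dec y (S N)). subst. exists i. split; auto. lia.
    destruct (HB y) as [i' [Hi'1 Hi'2]]. lia. exists i'. split; auto. lia.
Qed.

Lemma assoc_h2 hK p r k q : assoc_eval hK p k -> assoc_eval k r q -> assoc_eval (h2fun hK) (pairB p r) q.
Proof.
  intros HK Hk n.
  destruct (Hk n) as [js [Kpos [Kz Kv]]].
  set (m' := fun y => pairN n (code_list (prefix r y))).
  assert (KVs : forall y, exists i, forall B, (i < B -> sA hK (m' y) p B = k (m' y) + 1) /\
                                   (B <= i -> sA hK (m' y) p B = 0)).
  { intros y. destruct (HK (m' y)) as [i [Hp [Hz Hv]]]. exists i. intros B. split; intros.
    - rewrite (sA_lt _ _ _ _ i); auto. lia.
    - apply (sA_ge _ _ _ _ i); auto. }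
  assert (KVc : forall y B, sA hK (m' y) p B = 0 \/ sA hK (m' y) p B = k (m' y) + 1).
  { intros y B. destruct (KVs y) as [i Hi]. destruct (lt_dec i B). right; apply Hi; auto. left; apply Hi; lia. }
  assert (Claim1 : forall L, 0 < h2fun hK (pairN n (code_list (prefix (pairB p r) L))) ->
     h2fun hK (pairN n (code_list (prefix (pairB p r) L))) = S (q n)).
  { intros L. rewrite h2_eq.
    set (KV := KVf hK p r L n).
    set (j0 := bmin (fun y => neq1 (KV y)) (Nat.div2 L + 1)).
    destruct (ltn_cases j0 (Nat.div2 L + 1)) as [[H1 H2]|[H1 H2]]; rewrite H2; cbn [Nat.eqb]; [|lia].
    destruct (ltn_cases 1 (KV j0)) as [[H3 H4]|[H3 H4]]; rewrite H4; cbn [Nat.eqb]; [|lia].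
    intros _. destruct (bmin_found _ _ H1) as [H5 H6]. fold j0 in H5, H6.
    assert (Ekj : KV j0 = k (m' j0) + 1). { destruct (KVc j0 (Nat.div2 (L + 1) + 1)); unfold KV, KVf, m' in *; lia. }
    assert (Ez : forall y, y < j0 -> k (m' y) = 0).
    { intros y Hy. specialize (H6 y Hy). unfold neq1 in H6.
      destruct (KVc y (Nat.div2 (L + 1) + 1)); unfold KV, KVf, m' in *; lia. }
    assert (j0 = js).
    { destruct (lt_eq_lt_dec j0 js) as [[H|H]|H]; auto.
      - specialize (Kz _ H). unfold m' in Ekj. lia.
      - specialize (Ez _ H). unfold m' in Ez. lia. }
    subst j0. rewrite Ekj. rewrite <- H in *. unfold m' in *. lia. }
  assert (Claim2 : exists L, 0 < h2fun hK (pairN n (code_list (prefix (pairB p r) L)))).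
  { destruct (bound_ex _ KVs js) as [B HB].
    exists (2 * (B + js + 1)). rewrite h2_eq. unfold KVf. fold m'.
    rewrite Nat.div2_double. replace (2 * (B + js + 1) + 1) with (2 * (B + js + 1) + 1) by reflexivity.
    rewrite Nat.div2_odd'.
    assert (Hkv : forall y, y <= js -> sA hK (pairN n (code_list (prefix r y))) p (B + js + 1 + 1) = k (pairN n (code_list (prefix r y))) + 1).
    { intros y Hy. destruct (HB y Hy) as [i [Hi1 Hi2]]. apply Hi2. lia. }
    rewrite (bmin_eq _ _ js).
    - rewrite ltn_1 by lia. cbn [Nat.eqb]. rewrite Hkv by lia. rewrite ltn_1 by (unfold m' in *; lia).
      cbn [Nat.eqb]. unfold m' in *. lia.
    - lia.
    - rewrite Hkv by lia. unfold neq1, m' in *. lia.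
    - intros y Hy. rewrite Hkv by lia. specialize (Kz y Hy). unfold neq1, m' in *. lia. }
  destruct (least_ex (fun L => 0 < h2fun hK (pairN n (code_list (prefix (pairB p r) L))))) as [L [H1 H2]].
  - intros L. destruct (lt_dec 0 (h2fun hK (pairN n (code_list (prefix (pairB p r) L))))); auto.
  - auto.
  - exists L. split; auto. split.
    + intros j Hj. specialize (H2 j Hj). lia.
    + rewrite Claim1 by auto. lia.
Qed.
From Stdlib Require Import ClassicalEpsilon FunctionalExtensionality PropExtensionality.

Lemma assoc_eval_fun h q r1 r2 : assoc_eval h q r1 -> assoc_eval h q r2 -> r1 = r2.
Proof.
  intros H1 H2. apply functional_extensionality. intros n.
  destruct (H1 n) as [k1 [P1 [Z1 V1]]]. destruct (H2 n) as [k2 [P2 [Z2 V2]]].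
  assert (k1 = k2).
  { destruct (lt_eq_lt_dec k1 k2) as [[H|H]|H]; auto.
    - specialize (Z2 _ H). lia.
    - specialize (Z1 _ H). lia. }
  subst. rewrite V1, V2. reflexivity.
Qed.

Lemma deltaS_fun q b1 b2 : deltaS q b1 -> deltaS q b2 -> b1 = b2.
Proof.
  unfold deltaS. intros [[-> H1]|[-> [n H1]]] [[-> H2]|[-> [m H2]]]; auto.
  all: exfalso; first [apply H2; apply H1 | apply H1; apply H2].
Qed.

Lemma deltaA_unique (Rp : baire -> Prop) k A A' :
  deltaA (deltaSub Rp) k A -> deltaA (deltaSub Rp) k A' -> A = A'.
Proof.
  intros [chi [Hc Hci]] [chi' [Hc' Hci']].
  apply functional_extensionality. intros r. apply propositional_extensionality.
  destruct (Hc (proj1_sig r) r eq_refl (ex_intro _ (chi r) eq_refl)) as [q [b [Hq [Hb Hcb]]]].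
  destruct (Hc' (proj1_sig r) r eq_refl (ex_intro _ (chi' r) eq_refl)) as [q' [b' [Hq' [Hb' Hcb']]]].
  pose proof (assoc_eval_fun _ _ _ _ Hq Hq'). subst q'.
  pose proof (deltaS_fun _ _ _ Hb Hb'). subst b'.
  assert (E : chi r = chi' r) by congruence.
  split; intros HA; apply NNPP; intros HnA.
  - apply Hci' in HnA. rewrite <- E in HnA. apply Hci in HnA. auto.
  - apply Hci in HnA. rewrite E in HnA. apply Hci' in HnA. auto.
Qed.

Lemma prefix_eq_nth (a b : baire) k : prefix a k = prefix b k -> forall t, t < k -> a t = b t.
Proof. intros H t Ht. rewrite <- (nth_prefix a k t Ht), <- (nth_prefix b k t Ht), H. reflexivity. Qed.

Lemma prefix_eq_ext (a b : baire) k : (forall t, t < k -> a t = b t) -> prefix a k = prefix b k.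
Proof. intros H. unfold prefix. apply map_ext_in. intros t Ht. apply in_seq in Ht. apply H. lia. Qed.

Lemma prefix_pairB p r r' k0 j : prefix r' k0 = prefix r k0 -> j <= k0 ->
  prefix (pairB p r') j = prefix (pairB p r) j.
Proof.
  intros H Hj. apply prefix_eq_ext. intros t Ht. unfold pairB. destruct (Nat.even t); auto.
  apply (prefix_eq_nth _ _ k0 H). pose proof (Nat.div2_odd t). destruct (Nat.odd t); simpl in H0; lia.
Qed.
Lemma dir_LV_W (X Y : Type) (dX : rep X) (dY : rep Y)
  (Rp : baire -> Prop) (mu : (sub Rp -> Prop) -> ereal)
  (I : interval) (f : X -> Y -> Prop) :
  las_vegas dX dY f Rp mu I -> weihrauch dX dY f (deltaA (deltaSub Rp)) (deltaSub Rp) (PC Rp mu I).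
Proof.
  intros [F1 [F2 [HF1 [[h2 [Hh2 HF2]] HLV]]]].
  exists F1, (assoc_eval (hKfun h2)). split; auto. split.
  { exists (hKfun h2). split. apply hKfun_comp; auto. auto. }
  intros G HGf HG p x Hpx Hdom.
  specialize (HLV p x Hpx Hdom). cbv zeta in HLV. destruct HLV as [Htot [Hne [Hmu Hreal]]].
  set (S := fun r : sub Rp => exists q, F2 (pairB p (proj1_sig r)) q /\ forall n, q n = 0) in *.
  set (k := kfunP h2 p).
  set (chi := fun r : sub Rp => if excluded_middle_informative (S r) then false else true).
  assert (Hchi : forall r, chi r = true <-> ~ S r).
  { intros r. unfold chi. destruct (excluded_middle_informative (S r)); split; intros; auto; try discriminate; tauto. }
  assert (Hdelta : deltaA (deltaSub Rp) k S).
  { exists chi. split; auto. intros p0 x0 Hx0 _. unfold deltaSub in Hx0. subst p0.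
    destruct (Htot (proj1_sig x0) (proj2_sig x0)) as [q0 Hq0].
    exists q0, (chi x0). split; [|split; auto].
    - apply assoc_kfun. apply HF2. auto.
    - unfold chi. destruct (excluded_middle_informative (S x0)) as [HS|HS].
      + left. split; auto. destruct HS as [q1 [Hq1 Hz]].
        rewrite (assoc_eval_fun _ _ _ _ (HF2 _ _ Hq0) (HF2 _ _ Hq1)). auto.
      + right. split; auto. apply NNPP. intros Hn. apply HS. exists q0. split; auto.
        intros n. apply NNPP. intros Hn'. apply Hn. eauto. }
  assert (Hcl : closedR S).
  { intros r HnS. destruct (Htot (proj1_sig r) (proj2_sig r)) as [q0 Hq0].
    assert (Hnz : exists n, q0 n <> 0).
    { apply NNPP. intros Hn. apply HnS. exists q0. split; auto. intros n. apply NNPP. intros Hn'. apply Hn. eauto. }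
    destruct Hnz as [n Hn].
    destruct (HF2 _ _ Hq0 n) as [k0 [P0 [Z0 V0]]].
    exists k0. intros r' Hpre HS'. destruct HS' as [q1 [Hq1 Hz1]].
    destruct (HF2 _ _ Hq1 n) as [k1 [P1 [Z1 V1]]].
    assert (Epre : forall j, j <= k0 -> prefix (pairB p (proj1_sig r')) j = prefix (pairB p (proj1_sig r)) j).
    { intros j Hj. apply (prefix_pairB _ _ _ k0); auto. }
    assert (k1 = k0).
    { destruct (lt_eq_lt_dec k1 k0) as [[H|H]|H]; auto.
      - rewrite Epre in P1 by lia. specialize (Z0 _ H). lia.
      - specialize (Z1 _ H). rewrite Epre in Z1 by lia. lia. }
    subst k1. rewrite Epre in V1 by lia. specialize (Hz1 n). lia. }
  destruct Hne as [y0 Hy0].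
  destruct (HG k S Hdelta (ex_intro _ y0 (conj Hcl (conj (ex_intro _ y0 Hy0) (conj Hmu Hy0)))))
    as [s [y [HGs [Hys HPC]]]].
  destruct HPC as [_ [_ [_ HSy]]].
  destruct (Hreal y HSy) as [q [y' [Hq [HdY Hf]]]].
  exists q, y'. split; [|split; auto].
  exists k, s. split; [apply assoc_hK|]. split; auto.
  unfold deltaSub in Hys. rewrite <- Hys. auto.
Qed.
Lemma dir_W_LV (X Y : Type) (dX : rep X) (dY : rep Y)
  (Rp : baire -> Prop) (mu : (sub Rp -> Prop) -> ereal) (Hmu : borel_measure Rp mu)
  (I : interval) (f : X -> Y -> Prop) :
  weihrauch dX dY f (deltaA (deltaSub Rp)) (deltaSub Rp) (PC Rp mu I) -> las_vegas dX dY f Rp mu I.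
Proof.
  intros [H [K [HH [[hK [HhK HKc]] HW]]]].
  exists H, (assoc_eval (h2fun hK)). split; auto. split.
  { exists (h2fun hK). split. apply h2fun_comp; auto. auto. }
  intros p x Hpx Hdom. cbv zeta.
  set (sel := fun k : baire => epsilon (inhabits (fun _ : nat => 0))
     (fun s => exists A y, deltaA (deltaSub Rp) k A /\ PC Rp mu I A y /\ proj1_sig y = s)).
  set (G0 := fun k s => (exists A y, deltaA (deltaSub Rp) k A /\ PC Rp mu I A y) /\ s = sel k).
  assert (HG0f : functional G0).
  { intros a b1 b2 [_ ->] [_ ->]. reflexivity. }
  assert (HG0 : realizes (deltaA (deltaSub Rp)) (deltaSub Rp) (PC Rp mu I) G0).
  { intros k A HkA [y HAy].
    destruct (epsilon_spec (inhabits (fun _ : nat => 0))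
       (fun s => exists A y, deltaA (deltaSub Rp) k A /\ PC Rp mu I A y /\ proj1_sig y = s))
       as [A' [y' [HkA' [HPC' Hy']]]].
    { exists (proj1_sig y), A, y. auto. }
    rewrite <- (deltaA_unique _ _ _ _ HkA HkA') in HPC'.
    exists (sel k), y'. split. split; eauto. split; auto. }
  destruct (HW G0 HG0f HG0 p x Hpx Hdom) as [q0 [y0 [[k [s [HKk [HG0s _]]]] _]]].
  destruct HG0s as [[A [ya [HkA HPCa]]] _].
  pose proof (HKc _ _ HKk) as Hk.
  pose proof HkA as EkA. destruct HkA as [chi [Hchi Hchi']].
  assert (Hqr : forall r : sub Rp, exists qr b, assoc_eval k (proj1_sig r) qr /\ deltaS qr b /\ chi r = b).
  { intros r. apply (Hchi (proj1_sig r) r eq_refl). eauto. }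
  assert (Hequiv : forall r : sub Rp,
     (exists q, assoc_eval (h2fun hK) (pairB p (proj1_sig r)) q /\ forall n, q n = 0) <-> A r).
  { intros r. destruct (Hqr r) as [qr [b [Hqr1 [Hqr2 Hqr3]]]].
    pose proof (assoc_h2 _ _ _ _ _ Hk Hqr1) as Hh2.
    split.
    - intros [q [Hq Hz]]. rewrite (assoc_eval_fun _ _ _ _ Hq Hh2) in Hz.
      assert (b = false).
      { destruct Hqr2 as [[? ?]|[? [n Hn]]]; auto. exfalso. apply Hn. auto. }
      subst b. apply NNPP. intros HnA. apply Hchi' in HnA. congruence.
    - intros HA. exists qr. split; auto.
      assert (b = false).
      { destruct b; auto. exfalso. apply (proj1 (Hchi' r)); auto. }
      subst b. destruct Hqr2 as [[_ Hz]|[Hf _]]. exact Hz. congruence. }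
  assert (HSA : forall r : sub Rp, (exists q, assoc_eval (h2fun hK) (pairB p (proj1_sig r)) q /\ forall n, q n = 0) <-> A r) by exact Hequiv.
  destruct HPCa as [HclA [HneA [HmuA HAya]]].
  split; [|split; [|split]].
  - intros r Hr. destruct (Hqr (exist _ r Hr)) as [qr [b [Hqr1 _]]].
    exists qr. apply (assoc_h2 _ _ _ _ _ Hk Hqr1).
  - exists ya. apply HSA. auto.
  - destruct Hmu as [Hext _]. rewrite (Hext _ A HSA). auto.
  - intros r Hr. apply HSA in Hr.
    set (G := fun k' s => (k' = k /\ s = proj1_sig r) \/ (k' <> k /\ G0 k' s)).
    assert (HGf : functional G).
    { intros a b1 b2 [[-> ->]|[Ha H1]] [[Ha' ->]|[Ha' H2]]; try congruence.
      apply (HG0f a); auto. }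
    assert (HG : realizes (deltaA (deltaSub Rp)) (deltaSub Rp) (PC Rp mu I) G).
    { intros k' A'' HkA'' Hdom''.
      destruct (classic (k' = k)) as [->|Hne].
      - rewrite <- (deltaA_unique _ _ _ _ EkA HkA'') .
        exists (proj1_sig r), r. split. left; auto. split. reflexivity.
        split; [exact HclA|split; [exact HneA|split; [exact HmuA|exact Hr]]].
      - destruct (HG0 k' A'' HkA'' Hdom'') as [s' [y' [H1 [H2 H3]]]].
        exists s', y'. split. right; auto. auto. }
    destruct (HW G HGf HG p x Hpx Hdom) as [q [y [[k0 [s0 [HKk0 [HGs HHs]]]] [HdY Hf]]]].
    assert (k0 = k) by (apply (assoc_eval_fun hK p); apply HKc; auto).
    subst k0. destruct HGs as [[_ ->]|[Hne _]]; [|congruence].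
    exists q, y. auto.
Qed.

Theorem theorem3p5 (X Y : Type) (dX : rep X) (dY : rep Y)
  (HX : is_rep dX) (HY : is_rep dY)
  (R : baire -> Prop) (mu : (sub R -> Prop) -> ereal) (Hmu : borel_measure R mu)
  (I : interval) (HI : interval_wf I) (f : X -> Y -> Prop) :
  weihrauch dX dY f (deltaA (deltaSub R)) (deltaSub R) (PC R mu I)
  <-> las_vegas dX dY f R mu I.
Proof.
  split.
  - apply dir_W_LV; auto.
  - apply dir_LV_W.
Qed.
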